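(* Let $S\subseteq\mathbb{R}^n\times\mathbb{R}^m$ be convex. A set $\bar S\subseteq S$ is a solution of the convex projection (CP) if and only if it is a solution of the multi-objective problem (MOCP).
   Context: (CP): compute $Y=\{y\in\mathbb{R}^m:\exists x,(x,y)\in S\}$. A set $\bar S\subseteq S$ is a solution of (CP) if $Y\subseteq\operatorname{cl}\operatorname{conv}\operatorname{proj}_y[\bar S]$, where $\operatorname{proj}_y(x,y)=y$. (MOCP): minimize $P(x,y)=(y,-\mathbf{1}^\top y)$ w.r.t. $\le_{\mathbb{R}^{m+1}_+}$ subject to $(x,y)\in S$ ($\mathbf{1}\in\mathbb{R}^m$ all-ones), with upper image $\mathcal{P}=\operatorname{cl}(P[S]+\mathbb{R}^{m+1}_+)$. A set $\bar S\subseteq S$ is a solution of (MOCP) if $\mathcal{P}=\operatorname{cl}\operatorname{conv}(P[\bar S]+\mathbb{R}^{m+1}_+)$ (all feasible points are minimizers of (MOCP), so this coincides with the general notion of a solution as an infimizer consisting of minimizers). *)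

(* Defs.v *)
From HB Require Import structures.
From mathcomp Require Import all_boot all_order all_algebra.
From mathcomp Require Import all_classical all_reals topology normedtype.
Set Implicit Arguments. Unset Strict Implicit. Unset Printing Implicit Defensive.
Import Order.TTheory GRing.Theory Num.Theory.
Import numFieldNormedType.Exports.
Local Open Scope classical_set_scope.
Local Open Scope ring_scope.

Section Defs.
Variable R : realType.

Definition convexS (V : lmodType R) (A : set V) :=
  forall x y (t : R), A x -> A y -> 0 <= t -> t <= 1 -> A (t *: x + (1 - t) *: y).

Definition convexS2 (n m : nat) (S : set ('rV[R]_n * 'rV[R]_m)) :=
  forall x y (t : R), S x -> S y -> 0 <= t -> t <= 1 ->
    S (t *: x.1 + (1 - t) *: y.1, t *: x.2 + (1 - t) *: y.2).

Definition conv_hull (V : lmodType R) (A : set V) : set V :=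
  \bigcap_(C in [set C : set V | convexS C /\ A `<=` C]) C.

Definition msum (V : lmodType R) (A B : set V) : set V :=
  [set z | exists a b, A a /\ B b /\ z = a + b].

Definition orthant (k : nat) : set 'rV[R]_k := [set v | forall i, 0 <= v ord0 i].
Arguments orthant k : clear implicits.

Definition projY (n m : nat) (S : set ('rV[R]_n * 'rV[R]_m)) : set 'rV[R]_m :=
  [set y | exists x, S (x, y)].

Definition solCP (n m : nat) (S Sbar : set ('rV[R]_n * 'rV[R]_m)) :=
  Sbar `<=` S /\ projY S `<=` closure (conv_hull (snd @` Sbar)).

Definition Pobj {n m : nat} (xy : 'rV[R]_n * 'rV[R]_m) : 'rV[R]_(m + 1)%N :=
  row_mx xy.2 (\row_(j < 1) - \sum_(i < m) xy.2 ord0 i).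

Definition upper_image (n m : nat) (S : set ('rV[R]_n * 'rV[R]_m)) : set 'rV[R]_(m + 1)%N :=
  closure (msum (Pobj @` S) (orthant (m + 1)%N)).

Definition solMOCP (n m : nat) (S Sbar : set ('rV[R]_n * 'rV[R]_m)) :=
  Sbar `<=` S /\
  upper_image S = closure (conv_hull (msum (Pobj @` Sbar) (orthant (m + 1)%N))).

End Defs.

(* Main.v *)
Require Import Defs.
From HB Require Import structures.
From mathcomp Require Import all_boot all_order all_algebra.
From mathcomp Require Import all_classical all_reals topology normedtype.
From mathcomp Require Import ring lra.
Set Implicit Arguments. Unset Strict Implicit. Unset Printing Implicit Defensive.
Import Order.TTheory GRing.Theory Num.Theory.
Import numFieldNormedType.Exports.
Local Open Scope classical_set_scope.
Local Open Scope ring_scope.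

Lemma ballrv (R : realType) k (x y : 'rV[R]_k) e : 0 < e -> (ball x e y <-> forall i, `|x ord0 i - y ord0 i| < e).
Proof.
move=> e0; rewrite /ball /= /mx_ball.
split.
  move=> [_ H] i. have := H ord0 i. rewrite /ball /=. done.
move=> H; split => // i j. rewrite /ball /= (ord1 i). exact: H.
Qed.

Lemma closure_rv (R : realType) k (A : set 'rV[R]_k) x :
  closure A x <-> forall e : R, 0 < e -> exists a, A a /\ forall i, `|x ord0 i - a ord0 i| < e.
Proof.
split.
  move=> cl e e0.
  have [a [Aa Ba]] := cl (ball x e) (nbhsx_ballx x e e0).
  by exists a; split => //; apply/ballrv.
move=> H B /nbhs_ballP [e /= e0 Be].
have [a [Aa Ha]] := H e e0.
by exists a; split => //; apply: Be; apply/ballrv.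
Qed.

Lemma idx_case m (i : 'I_(m + 1)) : (exists j, i = lshift 1 j) \/ i = rshift m ord0.
Proof.
case: (splitP i) => [j eq|k eq].
  by left; exists j; apply: val_inj => /=; exact: eq.
by right; apply: val_inj => /=; rewrite [LHS]eq (ord1 k) /= addn0.
Qed.

Section S.
Variable R : realType.

Definition phi m (c : 'rV[R]_m) : 'rV[R]_(m + 1) :=
  row_mx c (\row_(j < 1) - \sum_(i < m) c ord0 i).

Lemma PobjE n m (xy : 'rV[R]_n * 'rV[R]_m) : Pobj xy = phi xy.2.
Proof. by []. Qed.

Lemma phiL m (r : 'I_1) (j : 'I_m) c : phi c r (lshift 1 j) = c ord0 j.
Proof. by rewrite /phi row_mxEl (ord1 r). Qed.

Lemma phiR m (r : 'I_1) c : phi c r (rshift m ord0) = - \sum_(i < m) c ord0 i.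
Proof. by rewrite /phi row_mxEr mxE. Qed.

Lemma combE k1 k2 (a b : R) (M N : 'M[R]_(k1, k2)) i j : (a *: M + b *: N) i j = a * M i j + b * N i j.
Proof. by rewrite !mxE. Qed.

Lemma phi_lin m (a b : R) (u v : 'rV[R]_m) : phi (a *: u + b *: v) = a *: phi u + b *: phi v.
Proof.
apply/rowP => i; case: (idx_case i) => [[j ->]|->].
  by rewrite combE !phiL combE.
rewrite combE !phiR.
under eq_bigr do rewrite !mxE.
by rewrite big_split /= -!mulr_sumr opprD !mulrN.
Qed.

Lemma conv_sub (V : lmodType R) (A : set V) : A `<=` conv_hull A.
Proof. by move=> x Ax Cc [_ hAC]; apply: hAC. Qed.

Lemma conv_min (V : lmodType R) (A Cc : set V) : convexS Cc -> A `<=` Cc -> conv_hull A `<=` Cc.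
Proof. by move=> cC hAC x; apply. Qed.

Lemma conv_convex (V : lmodType R) (A : set V) : convexS (conv_hull A).
Proof.
move=> x y t hx hy t0 t1; rewrite /conv_hull; move=> Cc /= HH.
case: (HH) => hC hA.
by apply: hC => //; [apply: (hx _ HH) | apply: (hy _ HH)].
Qed.

Lemma orthant_convex k : convexS (@orthant R k).
Proof.
move=> x y t hx hy t0 t1 i; rewrite !mxE.
by apply: addr_ge0; apply: mulr_ge0 => //; rewrite ?subr_ge0.
Qed.


Lemma addE k1 k2 (M N : 'M[R]_(k1, k2)) i j : (M + N) i j = M i j + N i j.
Proof. by rewrite !mxE. Qed.

Lemma comb_phi m (c c' : 'rV[R]_m) (k k' : 'rV[R]_(m + 1)) (t : R) :
  t *: (phi c + k) + (1 - t) *: (phi c' + k') =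
  phi (t *: c + (1 - t) *: c') + (t *: k + (1 - t) *: k').
Proof. by rewrite phi_lin !scalerDr addrACA. Qed.

Lemma pre_convex m (k : 'rV[R]_(m + 1)) (B : set 'rV[R]_(m + 1)) :
  convexS B -> convexS [set c : 'rV[R]_m | B (phi c + k)].
Proof.
move=> cB x y t hx hy t0 t1 /=.
have := cB _ _ t hx hy t0 t1.
rewrite comb_phi.
have -> : t *: k + (1 - t) *: k = k by rewrite -scalerDl addrC subrK scale1r.
done.
Qed.

Lemma T_convex m (Y : set 'rV[R]_m) :
  convexS [set z : 'rV[R]_(m + 1) | exists c k, conv_hull Y c /\ @orthant R _ k /\ z = phi c + k].
Proof.
move=> x y t [c [k [hc [hk ->]]]] [c' [k' [hc' [hk' ->]]]] t0 t1.
exists (t *: c + (1 - t) *: c'), (t *: k + (1 - t) *: k'); split; last split.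
- exact: conv_convex.
- exact: orthant_convex.
- exact: comb_phi.
Qed.

Lemma QK_convex n m (S : set ('rV[R]_n * 'rV[R]_m)) :
  convexS2 S -> convexS (msum ((@Pobj R n m) @` S) (@orthant R (m + 1)%N)).
Proof.
move=> cS z1 z2 t [a1 [k1 [[xy1 S1 <-] [hk1 ->]]]] [a2 [k2 [[xy2 S2 <-] [hk2 ->]]]] t0 t1.
exists (Pobj (t *: xy1.1 + (1 - t) *: xy2.1, t *: xy1.2 + (1 - t) *: xy2.2)),
  (t *: k1 + (1 - t) *: k2); split; last split.
- by exists (t *: xy1.1 + (1 - t) *: xy2.1, t *: xy1.2 + (1 - t) *: xy2.2) => //; apply: cS.
- exact: orthant_convex.
- by rewrite !PobjE comb_phi.
Qed.

End S.

Lemma delta_facts (R : realType) (m : nat) (e : R) : 0 < e ->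
  let d := e / (m.+1)%:R in 0 < d /\ d * m%:R + d = e.
Proof.
move=> e0 d; split; first by rewrite /d divr_gt0 // ltr0n.
have h : d * (m.+1)%:R = e by rewrite /d divfK // pnatr_eq0.
by rewrite -[(m.+1)%:R]natr1 mulrDr mulr1 in h.
Qed.

Theorem mainTheorem5 (R : realType) (n m : nat) (S : set ('rV[R]_n * 'rV[R]_m)) :
  convexS2 S ->
  forall Sbar : set ('rV[R]_n * 'rV[R]_m), Sbar `<=` S ->
    (solCP S Sbar <-> solMOCP S Sbar).
Proof.
move=> cS Sb sSb.
have QKc := QK_convex cS.
have key1 : conv_hull (msum ((@Pobj R n m) @` Sb) (@orthant R (m + 1)%N))
   `<=` msum ((@Pobj R n m) @` S) (@orthant R (m + 1)%N).
  apply: conv_min => // z [a [k [[xy hxy <-] [hk ->]]]].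
  by exists (Pobj xy), k; split => //; exists xy => //; apply: sSb.
split.
- case=> _ hCP; split => //.
  apply/seteqP; split; last first.
    by apply: closureS.
  rewrite /upper_image.
  have ce := (closure_id (closure (conv_hull (msum ((@Pobj R n m) @` Sb) (@orthant R (m + 1)%N))))).1 (@closed_closure _ _).
  rewrite ce; apply: closureS.
  move=> z [a [k [[[x y] Sxy <-] [hk ->]]]].
  have hy : closure (conv_hull (snd @` Sb)) y by apply: hCP; exists x.
  apply/closure_rv => e e0.
  have [d0 hd] := delta_facts m e0.
  set d := e / (m.+1)%:R in d0 hd.
  have [c [cc hc]] := (closure_rv _ _).1 hy d d0.
  exists (phi c + k); split.
    have : conv_hull (snd @` Sb) `<=`
        [set c : 'rV[R]_m | conv_hull (msum ((@Pobj R n m) @` Sb) (@orthant R (m + 1)%N)) (phi c + k)].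
      apply: conv_min; first by apply: pre_convex; apply: conv_convex.
      move=> yb [[xb yb'] Sbb <-] /=.
      apply: conv_sub; exists (phi yb'), k; split => //.
      by exists (xb, yb').
    by apply.
  move=> i; case: (idx_case i) => [[j ->]|->].
    rewrite PobjE !addE !phiL /=.
    have -> : y ord0 j + k ord0 (lshift 1 j) - (c ord0 j + k ord0 (lshift 1 j))
      = y ord0 j - c ord0 j by ring.
    have := hc j; have : 0 <= d * m%:R by rewrite mulr_ge0 // ltW.
    move=> ? ?; lra.
  rewrite PobjE !addE !phiR /=.
  have -> : - (\sum_(i < m) y ord0 i) + k ord0 (rshift m ord0)
      - (- (\sum_(i < m) c ord0 i) + k ord0 (rshift m ord0))
      = - \sum_(i < m) (y ord0 i - c ord0 i) by rewrite sumrB; ring.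
  rewrite normrN.
  apply: (le_lt_trans (ler_norm_sum _ _ _)).
  apply: (le_lt_trans (y := \sum_(i < m) d)).
    by apply: ler_sum => j _; apply: ltW; apply: hc.
  rewrite sumr_const card_ord -mulr_natr.
  lra.
- case=> _ hM; split => //.
  move=> y [x Sxy].
  have h1 : closure (conv_hull (msum ((@Pobj R n m) @` Sb) (@orthant R (m + 1)%N))) (phi y).
    rewrite -hM; apply: subset_closure.
    exists (Pobj (x, y)), 0; split; first by exists (x, y).
    by split; [move=> i; rewrite mxE | rewrite addr0].
  apply/closure_rv => e e0.
  have [d0 hd] := delta_facts m e0.
  set d := e / (m.+1)%:R in d0 hd.
  have [a [ca ha]] := (closure_rv _ _).1 h1 d d0.
  have key2 : conv_hull (msum ((@Pobj R n m) @` Sb) (@orthant R (m + 1)%N)) `<=`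
     [set z : 'rV[R]_(m + 1) | exists c k, conv_hull (snd @` Sb) c /\ @orthant R _ k /\ z = phi c + k].
    apply: conv_min; first exact: T_convex.
    move=> z [b [k [[[xb yb] Sbb <-] [hk ->]]]].
    exists yb, k; split; last by split.
    by apply: conv_sub; exists (xb, yb).
  have [c [k [cc [hk ea]]]] := key2 _ ca.
  exists c; split => // i.
  subst a.
  have hl : forall j, `|y ord0 j - (c ord0 j + k ord0 (lshift 1 j))| < d.
    by move=> j; have := ha (lshift 1 j); rewrite addE !phiL.
  have hr : `|- (\sum_(i < m) y ord0 i) - (- (\sum_(i < m) c ord0 i) + k ord0 (rshift m ord0))| < d.
    by have := ha (rshift m ord0); rewrite addE !phiR.
  have hkr := hk (rshift m ord0).
  have low : forall j, - d < y ord0 j - c ord0 j.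
    move=> j; have := hl j; have := hk (lshift 1 j); rewrite ltr_norml => ? /andP[? ?]; lra.
  have hsum : \sum_(j < m) (y ord0 j - c ord0 j + d) = \sum_(j < m) (y ord0 j - c ord0 j) + d * m%:R.
    by rewrite big_split /= sumr_const card_ord mulr_natr.
  have hsum2 : \sum_(j < m) (y ord0 j - c ord0 j) = \sum_(j < m) y ord0 j - \sum_(j < m) c ord0 j.
    by rewrite sumrB.
  have single : y ord0 i - c ord0 i + d <= \sum_(j < m) (y ord0 j - c ord0 j + d).
    rewrite (bigD1 i) //= lerDl; apply: sumr_ge0 => j _.
    by have := low j; lra.
  have := low i; move: hr; rewrite ltr_norml => /andP[? ?] ?.
  have dm : 0 <= d * m%:R by rewrite mulr_ge0 // ltW.
  rewrite ltr_norml; apply/andP; clearbody d; split; lra.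
Qed.
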